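(* Let $p$ be an odd prime, $q=p^e$ with $e\ge 1$, and let $k$ be an integer with $1\le k\le e$. Then $F_{p^k}(1,x)$ is a permutation polynomial of $\mathbb{F}_q$ if and only if $\gcd\!\left(\frac{p^k-1}{2},\,q-1\right)=1$.
   Context: For an integer $n\ge 1$, the $n$-th reversed Dickson polynomial of the third kind is $F_n(a,x)=\sum_{i=0}^{\lfloor n/2\rfloor}\frac{n-2i}{n-i}\binom{n-i}{i}(-x)^i a^{n-2i}$, where each coefficient $\frac{n-2i}{n-i}\binom{n-i}{i}$ is an integer (read in $\mathbb{F}_q$), and $F_0(a,x)=0$. A polynomial $f\in\mathbb{F}_q[x]$ is a permutation polynomial of $\mathbb{F}_q$ if $c\mapsto f(c)$ is a bijection of $\mathbb{F}_q$. *)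

(* Defs.v *)
From HB Require Import structures.
From mathcomp Require Import all_boot all_order all_algebra all_field.
Set Implicit Arguments. Unset Strict Implicit. Unset Printing Implicit Defensive.
Import GRing.Theory.
Local Open Scope ring_scope.

(* The integer coefficient (n-2i)/(n-i) * C(n-i,i), computed as an exact
   natural-number division (for 0 <= i <= n/2 and n >= 1 it is exact;
   for n = 0 it evaluates to 0). *)
Definition rd3_coef (n i : nat) : nat :=
  ((n - i.*2) * 'C(n - i, i)) %/ (n - i).

Definition rdickson3 (R : comNzRingType) (n : nat) (a : R) : {poly R} :=
  if n == 0%N then 0 else
  \sum_(i < n./2.+1)
     ((rd3_coef n i)%:R * a ^+ (n - i.*2)) *: (- 'X) ^+ i.

Definition perm_poly (F : finFieldType) (f : {poly F}) : Prop :=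
  bijective (fun c : F => f.[c]).

(* Main.v *)
Require Import Defs.
From HB Require Import structures.
From mathcomp Require Import all_boot all_order all_algebra all_field all_fingroup all_solvable.
From mathcomp Require Import zify ring.
Import GRing.Theory.
Local Open Scope ring_scope.

Lemma rd3_coefE n i : (0 < n)%N -> rd3_coef n i = 'C(n.-1 - i, i).
Proof.
rewrite /rd3_coef => n0.
have -> : (n - i.*2 = (n - i) - i)%N by rewrite -addnn subnDA.
rewrite -mul_bin_down.
case: (posnP (n - i)) => [N0|Npos].
  rewrite N0 mul0n div0n.
  have -> : (n.-1 - i = 0)%N by lia.
  rewrite bin0n; case: i N0 => //; lia.
rewrite mulKn //; congr 'C(_, _); lia.
Qed.

Lemma coef_sumNX (R : comNzRingType) N (c : nat -> R) j :
  (\sum_(i < N) c i *: (-'X)^+i)`_j = if (j < N)%N then c j * (-1)^+j else 0.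
Proof.
rewrite coef_sum.
under eq_bigr => i _ do rewrite -scaleN1r exprZn scalerA coefZ coefXn.
case: ifP => hj.
  rewrite (bigD1 (Ordinal hj)) //= eqxx mulr1 big1 ?addr0 // => i ne.
  rewrite (_ : (j == i) = false) ?mulr0 //; apply/negbTE.
  apply: contra ne => /eqP e; apply/eqP/val_inj => /=; by rewrite e.
rewrite big1 // => i _.
rewrite (_ : (j == i) = false) ?mulr0 //; apply/negbTE.
by apply: contraFN hj => /eqP ->; exact: ltn_ord.
Qed.

Definition Epoly (R : comNzRingType) n : {poly R} :=
  \sum_(i < n.+1) ('C(n - i, i)%:R) *: (-'X)^+i.

Lemma Ecoef (R : comNzRingType) n j :
  (Epoly R n)`_j = 'C(n - j, j)%:R * (-1)^+j.
Proof.
rewrite /Epoly (coef_sumNX _ _ (fun i => ('C(n - i, i))%:R)); case: ifP => // hj.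
have -> : (n - j = 0)%N by lia.
rewrite bin0n (_ : (j == 0%N) = false) ?mul0r //; lia.
Qed.

Lemma Epoly_rec (R : comNzRingType) n :
  Epoly R n.+2 = Epoly R n.+1 - 'X * Epoly R n.
Proof.
apply/polyP => j; rewrite coefB coefXM !Ecoef.
case: j => [|j] /=; first by rewrite !bin0 subr0.
suff -> : 'C(n.+2 - j.+1, j.+1) = ('C(n.+1 - j.+1, j.+1) + 'C(n - j, j))%N.
  by rewrite natrD exprS; ring.
case: (leqP j n) => hj.
  have -> : (n.+2 - j.+1 = (n - j).+1)%N by lia.
  have -> : (n.+1 - j.+1 = (n - j))%N by lia.
  by rewrite binS addnC.
have -> : (n.+2 - j.+1 = 0)%N by lia.
have -> : (n.+1 - j.+1 = 0)%N by lia.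
have -> : (n - j = 0)%N by lia.
by rewrite !bin0n; case: j hj.
Qed.

Lemma rdickson3E (R : comNzRingType) n : (0 < n)%N ->
  rdickson3 n (1 : R) = Epoly R n.-1.
Proof.
move=> n0; rewrite /rdickson3 (_ : (n == 0%N) = false); last by lia.
apply/polyP => j.
under eq_bigr => i _ do rewrite expr1n mulr1.
rewrite (coef_sumNX _ _ (fun i => (rd3_coef n i)%:R)) Ecoef rd3_coefE //.
case: ifP => // hj.
move/negbT: hj; rewrite -leqNgt => hj.
rewrite bin_small ?mul0r //.
have := odd_double_half n; have := leq_b1 (odd n); rewrite -muln2; lia.
Qed.

Section Mat.
Variable R : comNzRingType.
Local Notation P := {poly R}.

Definition Mm : 'M[P]_2 :=
  \matrix_(i, j) (if val i == 0%N then (if val j == 0%N then 1 else -'X)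
                  else (if val j == 0%N then 1 else 0)).

Lemma mul2 (A B : 'M[P]_2) i j :
  (A * B) i j = A i ord0 * B ord0 j + A i ord_max * B ord_max j.
Proof.
rewrite -mulmxE mxE !big_ord_recl big_ord0 addr0.
by have -> : lift ord0 ord0 = ord_max :> 'I_2 by apply/val_inj.
Qed.

Lemma Mpow n : (Mm ^+ n.+1) ord_max ord0 = Epoly R n /\
               (Mm ^+ n.+1) ord0 ord0 = Epoly R n.+1.
Proof.
elim: n => [|n [IH1 IH0]].
  rewrite expr1 !mxE /= /Epoly !big_ord_recl !big_ord0 /=.
  split; first by rewrite scale1r addr0.
  by rewrite bin0n /= scale0r scale1r !addr0.
rewrite exprS !mul2 IH1 IH0 !mxE /= Epoly_rec; split; first by ring.
by ring.
Qed.

Lemma frobk (A : nzRingType) p (h : p \in [pchar A]) (x y : A) k :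
  GRing.comm x y -> (x + y) ^+ (p ^ k) = x ^+ (p ^ k) + y ^+ (p ^ k).
Proof.
move=> cxy; elim: k => [|k IH]; first by rewrite !expr1.
rewrite expnSr !exprM IH -!(pFrobenius_autE h) pFrobenius_autD_comm //.
by apply/commrX/commr_sym/commrX/commr_sym.
Qed.

Lemma frobnat (A : nzRingType) p (h : p \in [pchar A]) n k :
  (n%:R : A) ^+ (p ^ k) = n%:R.
Proof.
elim: k => [|k IH]; first by rewrite expr1.
by rewrite expnSr exprM IH -(pFrobenius_autE h) pFrobenius_aut_nat.
Qed.


Lemma scalar_mxX (n : nat) (a : P) m : (a%:M : 'M[P]_n.+1) ^+ m = (a ^+ m)%:M.
Proof.
elim: m => [|m IH]; first by rewrite !expr0.
by rewrite !exprS IH scalar_mxM mulmxE.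
Qed.

End Mat.

Lemma mainE (F : finFieldType) p k : prime p -> odd p -> p \in [pchar F] ->
  Epoly F (p ^ k).-1 = (1 - 4%:R * 'X) ^+ (p ^ k).-1./2.
Proof.
move=> pp op hF.
set n := (p ^ k)%N; set m := n.-1./2.
have nE : n = (m * 2).+1.
  have on : odd n by rewrite /n oddX op orbT.
  have n0 : (0 < n)%N by rewrite /n expn_gt0 prime_gt0.
  have := odd_double_half n.-1.
  have -> : odd n.-1 = false by case: (n) on n0 => //= n' /negbTE.
  rewrite /m -muln2; lia.
have hP : p \in [pchar {poly F}] by rewrite pchar_poly.
have hA : p \in [pchar 'M[{poly F}]_2].
  apply/andP; split => //.
  have -> : (p%:R : 'M[{poly F}]_2) = (p%:R : {poly F})%:M by rewrite raddfMn.
  by rewrite (pcharf0 hP) raddf0.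
have two0 : (2%:R : {poly F}) != 0.
  rewrite -polyC_natr polyC_eq0 -(dvdn_pcharf hF).
  apply/negP => /(@dvdn_leq _ 2 erefl) h2; move: (prime_gt1 pp) => g1.
  have e : p = 2%N by lia.
  by move: op; rewrite e.
set c : {poly F} := 1 - 4%:R * 'X.
set Pm : 'M[{poly F}]_2 :=
  \matrix_(i, j) (if val i == 0%N then (if val j == 0%N then 1 else -(2%:R * 'X))
                  else (if val j == 0%N then 2%:R else -1)).
have h1 : (2%:R : {poly F}) *: Mm F = 1 + Pm.
  apply/matrixP => i j; rewrite !mxE -?val_eqE.
  case: i => [[|[|i]] hi] //=; case: j => [[|[|j]] hj] //=; ring.
have h2 : Pm * Pm = c%:M.
  apply/matrixP => i j; rewrite mul2 !mxE -?val_eqE.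
  case: i => [[|[|i]] hi] //=; case: j => [[|[|j]] hj] //=; rewrite /c; ring.
have key := congr1 (fun A : 'M[{poly F}]_2 => A ^+ n) h1; move: key => /=.
rewrite exprZn (frobnat _ _ hP) (frobk _ _ hA) ?expr1n; last exact/commr_sym/commr1.
have PE : Pm ^+ n = Pm * (c ^+ m)%:M by rewrite nE exprS mulnC exprM expr2 h2 scalar_mxX.
rewrite -/n PE.
move=> /(congr1 (fun A : 'M_2 => A ord_max ord0)).
rewrite -mulmxE mul_mx_scalar !mxE /=.
have -> : n = (n.-1).+1 by rewrite nE.
rewrite (Mpow F n.-1).1 add0r => e.
apply: (mulfI two0); rewrite e; ring.
Qed.

Lemma pow_inj (F : finFieldType) m : (0 < m)%N ->
  injective (fun x : F => x ^+ m) <-> coprime m #|F|.-1.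
Proof.
move=> m0; rewrite -card_finField_unit; split.
  move=> inj; apply: contraT => ncop.
  set d := gcdn m #|[set: {unit F}]|.
  have d1 : (1 < d)%N.
    have : (0 < d)%N by rewrite gcdn_gt0 m0.
    move: ncop; rewrite /coprime -/d; lia.
  have pr := pdiv_prime d1.
  have hdG : (pdiv d %| #|[set: {unit F}]|)%N.
    exact: dvdn_trans (pdiv_dvd d) (dvdn_gcdr _ _).
  have [u _ ou] := Cauchy pr hdG.
  have um : (u ^+ m = 1)%g.
    apply/eqP; rewrite -order_dvdn ou.
    exact: dvdn_trans (pdiv_dvd d) (dvdn_gcdl _ _).
  have : val u = 1.
    apply: inj => /=; rewrite expr1n -FinRing.val_unitX um //.
  move=> u1; have : u = 1%g by apply/val_inj.
  move=> e; move: ou; rewrite e order1 => e1.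
  by move: pr; rewrite -e1.
move=> cop x y /= exy.
case: (eqVneq x 0) => [x0|x0].
  move: exy; rewrite x0 expr0n gtn_eqF // => /esym /eqP.
  by rewrite expf_eq0 m0 => /eqP.
case: (eqVneq y 0) => [y0|y0].
  move: exy; rewrite y0 expr0n gtn_eqF // => /eqP.
  by rewrite expf_eq0 m0 => /eqP.
have ux : x / y \is a GRing.unit by rewrite unitfE mulf_neq0 ?invr_eq0.
pose u : {unit F} := FinRing.Unit ux.
have um : (u ^+ m = 1)%g.
  apply/val_inj; rewrite FinRing.val_unitX /= expr_div_n exy divff //.
  by rewrite expf_neq0.
have : (#[u]%g %| 1)%N.
  rewrite -(eqnP cop) dvdn_gcd order_dvdn um eqxx /=.
  by apply: order_dvdG; rewrite inE.
rewrite dvdn1 order_eq1 => /eqP u1.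
apply: divr1_eq; have := congr1 val u1; by [].
Qed.

Theorem theorem2p6 (p e k : nat) (F : finFieldType) :
  prime p -> odd p -> (0 < e)%N -> #|F| = (p ^ e)%N ->
  (1 <= k <= e)%N ->
  (perm_poly (rdickson3 (p ^ k) (1 : F)) <->
   gcdn ((p ^ k - 1) %/ 2) (p ^ e - 1) = 1%N).
Proof.
move=> pp op e0 cF /andP[k1 ke].
have hF : p \in [pchar F] by apply: (card_finPcharP cF pp).
have p0 : (0 < p)%N by apply: prime_gt0.
have pk : (p <= p ^ k)%N by rewrite -{1}(expn1 p) leq_pexp2l.
have p3 : (3 <= p)%N.
  have := prime_gt1 pp; case: p pp op {hF p0 pk cF} => [|[|[|]]] //.
set m := (p ^ k).-1./2.
have m0 : (0 < m)%N.
  have := odd_double_half (p ^ k).-1; have := leq_b1 (odd (p ^ k).-1).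
  rewrite /m -muln2; lia.
have -> : ((p ^ k - 1) %/ 2 = m)%N by rewrite subn1 divn2.
have -> : (p ^ e - 1 = #|F|.-1)%N by rewrite cF subn1.
have four0 : (4%:R : F) != 0.
  rewrite -(dvdn_pcharf hF); apply/negP => h; have h4 := @dvdn_leq _ 4 erefl h.
  have e3 : p = 3%N.
    have : p = 3%N \/ p = 4%N by lia.
    by case=> // e4; move: op; rewrite e4.
  by move: h; rewrite e3.
rewrite rdickson3E ?expn_gt0 ?p0 // mainE // -/m.
have ev c : ((1 - 4%:R * 'X : {poly F}) ^+ m).[c] = (1 - 4%:R * c) ^+ m.
  by rewrite horner_exp -polyC_natr hornerD hornerN hornerCM hornerX hornerC.
have cE : (gcdn m #|F|.-1 = 1%N) <-> coprime m #|F|.-1 by split => h; [rewrite /coprime h | apply/eqP].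
eapply iff_trans; last exact: (iff_trans (pow_inj F m m0) (iff_sym cE)).
rewrite /perm_poly; split.
  move=> /bij_inj inj x y exy.
  have h c : (1 - 4%:R * ((1 - c) / 4%:R) : F) = c.
    by rewrite mulrC divfK // subKr.
  rewrite -(h x) -(h y); congr (1 - 4%:R * _); apply: inj.
  by rewrite /= !ev !h.
move=> inj; apply: injF_bij => x y /=; rewrite !ev => /inj /eqP.
by rewrite (inj_eq (@addrI _ 1)) (inj_eq (@oppr_inj _)) => /eqP /(mulfI four0).
Qed.
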